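(* Let $\{P_\theta:\theta\in\Theta\}$ be a family of distributions on a measurable space $\mathbb{X}$, let $\mathcal{L}$ be a measurable nonnegative loss, and for an estimator $\varphi$ (a measurable function of finite sequences of elements of $\mathbb{X}$) define ${\sf risk}_n(\varphi,\theta)=\mathbb{E}_\theta[\mathcal{L}(\varphi(X_1,\dots,X_n),\theta)]$ with $X_1,\dots,X_n$ i.i.d. from $P_\theta$, ${\sf risk}_n(\varphi)=\sup_{\theta\in\Theta}{\sf risk}_n(\varphi,\theta)$, and the minimax risk $R(n)=\inf_\varphi {\sf risk}_n(\varphi)$, assumed finite for all $n$ large enough. Suppose $\limsup_{a\to\infty}\limsup_{n\to\infty} R(an)/R(n)=0$. Then for any estimator $\varphi$ that can be computed in $o(n)$ time when applied to a sample of size $n$, ${\sf risk}_n(\varphi)/R(n)\to\infty$ as $n\to\infty$.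
   Context: Computational model: it takes one unit of time to register (read) an observation for further processing, so an algorithm running in time $b(n)$ on a sample of size $n$ can read at most $b(n)$ observations, where the index of each observation read may depend on the values of previously read observations. *)

(* Defs.v *)
From HB Require Import structures.
From mathcomp Require Import all_boot all_order all_algebra.
From mathcomp Require Import all_classical all_reals all_analysis measurable_realfun.
Set Implicit Arguments. Unset Strict Implicit. Unset Printing Implicit Defensive.
Import Order.TTheory GRing.Theory Num.Theory.
Import numFieldNormedType.Exports.
Local Open Scope classical_set_scope.
Local Open Scope ring_scope.

Section Minimax.
Context {R : realType} {dX : measure_display} (X : measurableType dX).

Fixpoint smpl (n : nat) : {d : measure_display & measurableType d} :=
  match n with
  | 0 => existT measurableType _ (unit : measurableType _)
  | n'.+1 => existT measurableType _ ((X * projT2 (smpl n'))%type : measurableType _)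
  end.
Definition smplT (n : nat) : measurableType (projT1 (smpl n)) := projT2 (smpl n).

Fixpoint iid (Q : probability X R) (n : nat) : probability (smplT n) R :=
  match n return probability (smplT n) R with
  | 0 => (@dirac _ unit tt R : probability unit R)
  | n'.+1 => ((Q \x iid Q n')%E : probability (X * smplT n')%type R)
  end.

Fixpoint totuple (n : nat) : smplT n -> n.-tuple X :=
  match n return smplT n -> n.-tuple X with
  | 0 => fun _ => [tuple]
  | n'.+1 => fun s => [tuple of s.1 :: @totuple n' s.2]
  end.
Definition obs (n : nat) (s : smplT n) (i : 'I_n) : X := tnth (totuple s) i.

(* Adaptive reading: the index of the (k+1)-th observation read is
   idx k applied to the k values read so far (most recent first). *)
Fixpoint reads (n : nat) (idx : forall k, smplT k -> 'I_n) (x : smplT n)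
    (k : nat) : smplT k :=
  match k return smplT k with
  | 0 => tt
  | k'.+1 => (obs x (idx k' (reads idx x k')), reads idx x k')
  end.

Definition computed_reading {dY} {Y : measurableType dY} (n m : nat)
    (f : smplT n -> Y) : Prop :=
  exists (idx : forall k, smplT k -> 'I_n) (out : smplT m -> Y),
    [/\ (forall k, (k < m)%N -> forall j : 'I_n, measurable (idx k @^-1` [set j])),
        measurable_fun setT out &
        forall x, f x = out (reads idx x m)].

Context {Theta : Type} (P : Theta -> probability X R).
Context {dY : measure_display} {Y : measurableType dY} (L : Y -> Theta -> \bar R).

Definition risk (n : nat) (f : smplT n -> Y) (theta : Theta) : \bar R :=
  (\int[iid (P theta) n]_x L (f x) theta)%E.

Definition riskn (n : nat) (f : smplT n -> Y) : \bar R :=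
  ereal_sup [set risk f theta | theta in [set: Theta]].

Definition minimax (n : nat) : \bar R :=
  ereal_inf [set riskn f | f in [set f : smplT n -> Y | measurable_fun setT f]].

End Minimax.

(* Main.v *)
Require Import Defs.
From HB Require Import structures.
From mathcomp Require Import all_boot all_order all_algebra.
From mathcomp Require Import all_classical all_reals all_analysis measurable_realfun.
Import Order.TTheory GRing.Theory Num.Theory.
Import numFieldNormedType.Exports.
Local Open Scope classical_set_scope.
Local Open Scope ring_scope.
Set Implicit Arguments. Unset Strict Implicit.

Section S.
Context {R : realType} {dX : measure_display} (X : measurableType dX).
Local Open Scope ereal_scope.

Lemma obs0 n (a : X) (w : smplT X n) : obs (n:=n.+1) (a, w) ord0 = a.
Proof. by rewrite /obs (tnth_nth a). Qed.

Lemma obsS n (a : X) (w : smplT X n) (j : 'I_n) : obs (n:=n.+1) (a, w) (lift ord0 j) = obs w j.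
Proof. by rewrite /obs (tnth_nth a) /= (tnth_nth a). Qed.

Lemma measurable_obs n (i : 'I_n) : measurable_fun setT (fun x : smplT X n => obs x i).
Proof.
elim: n i => [[]//|n IH] i.
case: (unliftP ord0 i) => [j ->|->].
- have -> : (fun x : smplT X n.+1 => obs x (lift ord0 j)) = (fun x => obs x.2 j).
    by apply: funext => -[a w]; rewrite obsS.
  exact: measurableT_comp (IH j) measurable_snd.
- have -> : (fun x : smplT X n.+1 => obs x ord0) = fst.
    by apply: funext => -[a w]; rewrite obs0.
  exact: measurable_fst.
Qed.

Fixpoint selS (n r : nat) : ('I_r -> 'I_n) -> smplT X n -> smplT X r :=
  match r return ('I_r -> 'I_n) -> smplT X n -> smplT X r with
  | 0 => fun _ _ => tt
  | r'.+1 => fun d x => (obs x (d ord0), @selS n r' (fun i => d (lift ord0 i)) x)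
  end.

Lemma measurable_selS n r (d : 'I_r -> 'I_n) : measurable_fun setT (selS d).
Proof.
elim: r d => [d|r IH d] /=.
  exact: measurable_cst.
apply: measurable_fun_pair; first exact: measurable_obs.
exact: IH.
Qed.

Lemma obs_selS n r (d : 'I_r -> 'I_n) x i : obs (selS d x) i = obs x (d i).
Proof.
elim: r d i => [d []//|r IH d i] /=.
case: (unliftP ord0 i) => [j ->|->].
- by rewrite obsS IH.
- by rewrite obs0.
Qed.

Variable Q : probability X R.

Lemma iidS n (f : smplT X n.+1 -> \bar R) : measurable_fun setT f -> (forall x, 0 <= f x) ->
  \int[iid Q n.+1]_x f x = \int[Q]_a \int[iid Q n]_w f (a, w).
Proof. move=> mf f0; exact: (fubini_tonelli1 f mf f0). Qed.

Lemma iid0 (f : smplT X 0 -> \bar R) : \int[iid Q 0]_x f x = f tt.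
Proof.
have -> : f = cst (f tt) by apply: funext => -[].
by rewrite integral_cst//= diracT mule1.
Qed.

Lemma int_cstP d (T : measurableType d) (P : probability T R) (c : \bar R) :
  \int[P]_x c = c.
Proof. rewrite integral_cst//. set s := (X in _ * X). have -> : s = 1 by exact: probability_setT. by rewrite mule1. Qed.

Fixpoint ins (r : nat) (j : nat) (u : X) : smplT X r -> smplT X r.+1 :=
  match r return smplT X r -> smplT X r.+1 with
  | 0 => fun _ => (u, tt)
  | r'.+1 => fun w => match j with
             | 0 => (u, w)
             | j'.+1 => (w.1, @ins r' j' u w.2) end
  end.

Lemma measurable_ins r j : measurable_fun setT (fun p : X * smplT X r => ins j p.1 p.2).
Proof.
elim: r j => [j|r IH [|j]] /=.
- apply: measurable_fun_pair; first exact: measurable_fst.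
  exact: measurable_cst.
- apply: measurable_fun_pair; first exact: measurable_fst.
  exact: measurable_snd.
- apply: measurable_fun_pair.
    exact: measurableT_comp measurable_fst measurable_snd.
  have -> : (fun x : X * smplT X r.+1 => ins j x.1 x.2.2) =
     (fun p : X * smplT X r => ins j p.1 p.2) \o (fun x : X * smplT X r.+1 => (x.1, x.2.2)).
    by [].
  apply: measurableT_comp; first exact: IH.
  apply: measurable_fun_pair; first exact: measurable_fst.
  exact: measurableT_comp measurable_snd measurable_snd.
Qed.

Lemma ins_law r j (H : smplT X r.+1 -> \bar R) :
  measurable_fun setT H -> (forall x, 0 <= H x) ->
  \int[Q]_u \int[iid Q r]_w H (ins j u w) = \int[iid Q r.+1]_z H z.
Proof.
elim: r j H => [j H mH H0|r IH [|j] H mH H0].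
- rewrite (iidS mH H0); apply: eq_integral => u _; rewrite !iid0 /=; by [].
- by rewrite (iidS mH H0).
- rewrite /=.
  transitivity (\int[Q]_u \int[Q]_w0 \int[iid Q r]_w H (w0, ins j u w)).
    apply: eq_integral => u _; rewrite iidS//.
    + apply: measurableT_comp; first exact: mH.
      apply: measurable_fun_pair; first exact: measurable_fst.
      have -> : (fun x : X * smplT X r => ins j u x.2) =
         (fun p : X * smplT X r => ins j p.1 p.2) \o (fun x : X * smplT X r => (u, x.2)) by [].
      apply: measurableT_comp; first exact: measurable_ins.
      apply: measurable_fun_pair; first exact: measurable_cst.
      exact: measurable_snd.
  rewrite (fubini_tonelli (fun p : X * X => \int[iid Q r]_w H (p.2, ins j p.1 w)))/=.
  + rewrite (iidS mH H0); apply: eq_integral => w0 _.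
    rewrite -(IH j (fun z => H (w0, z)))//.
    exact: measurable_fun_pair2.
  + apply: (measurable_fun_fubini_tonelli_F (fun q : (X * X) * smplT X r => H (q.1.2, ins j q.1.1 q.2))).
    * apply: measurableT_comp; first exact: mH.
      apply: measurable_fun_pair.
        exact: measurableT_comp measurable_snd measurable_fst.
      have -> : (fun q : (X * X) * smplT X r => ins j q.1.1 q.2) =
         (fun p : X * smplT X r => ins j p.1 p.2) \o (fun q : (X * X) * smplT X r => (q.1.1, q.2)) by [].
      apply: measurableT_comp; first exact: measurable_ins.
      apply: measurable_fun_pair; last exact: measurable_snd.
      exact: measurableT_comp measurable_fst measurable_fst.
    * by move=> q; apply: H0.
  + by move=> p; apply: integral_ge0 => w _; apply: H0.
Qed.

Lemma selS_liftA n r (d : 'I_r -> 'I_n.+1) (e : 'I_r -> 'I_n) a w :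
  (forall i, d i = lift ord0 (e i)) -> selS (n:=n.+1) d (a, w) = selS e w.
Proof.
elim: r d e => [//|r IH] d e de /=.
by rewrite de obsS (IH _ (fun i => e (lift ord0 i))).
Qed.

Lemma measurable_ins1 r j (a : X) : measurable_fun setT (fun w : smplT X r => ins j a w).
Proof.
have -> : (fun w : smplT X r => ins j a w) =
   (fun p : X * smplT X r => ins j p.1 p.2) \o (fun w => (a, w)) by [].
apply: measurableT_comp; first exact: measurable_ins.
by apply: measurable_fun_pair; [exact: measurable_cst|exact: measurable_id].
Qed.

Lemma selS_ins n r (j : 'I_r.+1) (d : 'I_r.+1 -> 'I_n.+1) (e : 'I_r -> 'I_n) a w :
  d j = ord0 -> (forall i, d (lift j i) = lift ord0 (e i)) ->
  selS (n:=n.+1) d (a, w) = ins j a (selS e w).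
Proof.
elim: r j d e => [|r IH] j d e dj de.
  have j0 : j = ord0 by apply: val_inj => /=; move: (ltn_ord j); rewrite ltnS leqn0 => /eqP.
  by rewrite /= -j0 dj obs0.
case: j dj de => -[|j] jlt dj de.
- have j0 : Ordinal jlt = ord0 by apply: val_inj.
  rewrite j0 in dj de.
  rewrite /= dj obs0; congr pair; congr pair; first by rewrite de obsS.
  by apply: selS_liftA => i; rewrite de.
- have jlt' : (j < r.+1)%N by [].
  rewrite /=.
  have d0 : d ord0 = lift ord0 (e ord0).
    rewrite -de; congr d; apply: val_inj => /=. by [].
  rewrite d0 obsS.
  congr pair.
  apply: (IH (Ordinal jlt') (fun i => d (lift ord0 i)) (fun i => e (lift ord0 i))).
  + rewrite -dj; congr d; apply: val_inj => /=. by rewrite /bump.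
  + move=> i; rewrite -de; congr d; apply: val_inj => /=.
    by rewrite /bump /= !add1n ltnS; case: (j <= i)%N.
Qed.

Lemma sel_law n r (d : 'I_r -> 'I_n) (H : smplT X r -> \bar R) :
  injective d -> measurable_fun setT H -> (forall x, 0 <= H x) ->
  \int[iid Q n]_x H (selS d x) = \int[iid Q r]_z H z.
Proof.
elim: n r d H => [|n IH] r d H injd mH H0.
  case: r d H injd mH H0 => [|r] d H injd mH H0; last by case: (d ord0).
  by rewrite !iid0.
have mHd : measurable_fun setT (fun x => H (selS d x)).
  exact: measurableT_comp mH (measurable_selS d).
rewrite (iidS mHd (fun x => H0 _)).
have [[j dj]|nj] := pselect (exists j, d j = ord0).
- case: r d H injd mH H0 mHd j dj => [|r] d H injd mH H0 mHd j dj; first by move: (ltn_ord j).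
  have : forall i : 'I_r, exists k : 'I_n, d (lift j i) = lift ord0 k.
    move=> i; case: (unliftP ord0 (d (lift j i))) => [k ->|h]; first by exists k.
    by move: (injd _ _ (etrans h (esym dj))) => /eqP; rewrite eq_sym (negbTE (neq_lift _ _)).
  case/fin_all_exists => e de.
  have inje : injective e.
    move=> i1 i2 h; apply: (lift_inj (h := j)); apply: injd.
    by rewrite !de h.
  transitivity (\int[Q]_a \int[iid Q r]_v H (ins j a v)).
    apply: eq_integral => a _.
    under eq_integral do rewrite (selS_ins _ _ dj de).
    apply: (IH _ e (fun v => H (ins j a v))) => //.
    exact: measurableT_comp mH (measurable_ins1 _ _).
  exact: ins_law.
- have : forall i : 'I_r, exists k : 'I_n, d i = lift ord0 k.
    move=> i; case: (unliftP ord0 (d i)) => [k ->|h]; first by exists k.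
    by exfalso; apply: nj; exists i.
  case/fin_all_exists => e de.
  have inje : injective e.
    by move=> i1 i2 h; apply: injd; rewrite !de h.
  under eq_integral do under eq_integral do rewrite (selS_liftA _ _ de).
  under eq_integral do rewrite (IH _ e H inje mH H0).
  exact: int_cstP.
Qed.

End S.


Section Fib.
Context {d} (T : measurableType d).

Definition mfib (C : Type) (f : T -> C) := forall c, measurable (f @^-1` [set c]).

Lemma count_bigcup (I : countType) (F : I -> set T) :
  (forall i, measurable (F i)) -> measurable (\bigcup_(i in [set: I]) F i).
Proof.
move=> mF.
have -> : \bigcup_(i in [set: I]) F i =
   \bigcup_(k in [set: nat]) (match unpickle k with Some i => F i | None => set0 end).
  apply/seteqP; split=> x [i _ Fi].
  - by exists (pickle i) => //; rewrite pickleK.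
  - by case: (unpickle i) Fi => // j Fj; exists j.
apply: bigcup_measurable => k _; case: (unpickle k) => //.
Qed.

Lemma mfib2 (C1 C2 : countType) (C : Type) (a : T -> C1) (b : T -> C2) (phi : C1 -> C2 -> C) :
  mfib a -> mfib b -> mfib (fun x => phi (a x) (b x)).
Proof.
move=> ma mb c.
have -> : (fun x => phi (a x) (b x)) @^-1` [set c] =
  \bigcup_(pq in [set: (C1 * C2)%type])
     (if pselect (phi pq.1 pq.2 = c) then a @^-1` [set pq.1] `&` b @^-1` [set pq.2] else set0).
  apply/seteqP; split=> x /=.
  - move=> h; exists (a x, b x) => //=.
    by destruct (pselect (phi (a x) (b x) = c)).
  - move=> [[p q] _] /=; destruct (pselect (phi p q = c)) as [h|h] => //= -[/= ha hb]; by rewrite ha hb.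
apply: count_bigcup => -[p q] /=; destruct (pselect (phi p q = c)) => //=.
  exact: measurableI.
Qed.

Lemma mfib_cst (C : Type) (c0 : C) : mfib (fun _ : T => c0).
Proof.
move=> c; case: (pselect (c0 = c)) => [<-|h].
- have -> : (fun _ : T => c0) @^-1` [set c0] = setT by apply/seteqP; split.
  exact: measurableT.
- have -> : (fun _ : T => c0) @^-1` [set c] = set0 by apply/seteqP; split => // x /=.
  exact: measurable0.
Qed.

Lemma mfib_meas d2 (T2 : measurableType d2) (C : countType) (c : T -> C) (g : C -> T -> T2) :
  mfib c -> (forall j, measurable_fun setT (g j)) -> measurable_fun setT (fun x => g (c x) x).
Proof.
move=> mc mg _ A mA; rewrite setTI.
have -> : (fun x => g (c x) x) @^-1` A = \bigcup_(j in [set: C]) (c @^-1` [set j] `&` g j @^-1` A).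
  apply/seteqP; split=> x /=.
  - by move=> h; exists (c x).
  - by move=> [j _ [/= -> h]].
apply: count_bigcup => j; apply: measurableI; first exact: mc.
by have := mg j measurableT _ mA; rewrite setTI.
Qed.

End Fib.
Arguments mfib {d T C}.

Lemma mfib_comp d (T : measurableType d) d2 (T2 : measurableType d2) (C : Type) (f : T2 -> C) (g : T -> T2) :
  measurable_fun setT g -> mfib f -> mfib (f \o g).
Proof.
move=> mg mf c.
have := mg measurableT _ (mf c); rewrite setTI; by [].
Qed.


Section Reads.
Context {R : realType} {dX : measure_display} (X : measurableType dX).
Local Open Scope ereal_scope.

Fixpoint idxsT (n : nat) (idx : forall k, smplT X k -> 'I_n) (k : nat) : smplT X k -> k.-tuple 'I_n :=
  match k return smplT X k -> k.-tuple 'I_n with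
  | 0 => fun _ => [tuple]
  | k'.+1 => fun v => [tuple of idx k' v.2 :: idxsT idx v.2]
  end.

Lemma obs_ext k (v w : smplT X k) : (forall i, obs v i = obs w i) -> v = w.
Proof.
elim: k v w => [[] []//|k IH] [a v] [b w] h.
have := h ord0; rewrite !obs0 => ->.
congr pair; apply: IH => i.
by have := h (lift ord0 i); rewrite !obsS.
Qed.

Lemma tnth_idxs0 n idx k (v : smplT X k.+1) : tnth (@idxsT n idx k.+1 v) ord0 = idx k v.2.
Proof. by rewrite (tnth_nth (idx k v.2)). Qed.

Lemma tnth_idxsS n idx k (v : smplT X k.+1) i :
  tnth (@idxsT n idx k.+1 v) (lift ord0 i) = tnth (idxsT idx v.2) i.
Proof. by rewrite (tnth_nth (idx k v.2)) /= (tnth_nth (idx k v.2)). Qed.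

Definition consis n (idx : forall k, smplT X k -> 'I_n) (x : smplT X n) k (v : smplT X k) :=
  forall i, obs v i = obs x (tnth (idxsT idx v) i).

Lemma reads_consis n idx x k : consis idx x (reads (n:=n) idx x k).
Proof.
elim: k => [[]//|k IH] i.
case: (unliftP ord0 i) => [j ->|->].
- by rewrite obsS tnth_idxsS IH.
- by rewrite obs0 tnth_idxs0.
Qed.

Lemma consis_reads n idx x k v : consis idx x v -> v = reads (n:=n) idx x k.
Proof.
elim: k v => [[]//|k IH] [a v] h.
have hv : consis idx x v.
  by move=> i; have := h (lift ord0 i); rewrite obsS tnth_idxsS.
have := h ord0; rewrite obs0 tnth_idxs0 /= => ->.
by rewrite -(IH v hv).
Qed.

Lemma selS_comp n r p (dd : 'I_r -> 'I_n) (c : 'I_p -> 'I_r) (x : smplT X n) :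
  selS (fun i => dd (c i)) x = selS c (selS dd x).
Proof. by apply: obs_ext => i; rewrite !obs_selS. Qed.

Lemma mfib_idxs n (idx : forall k, smplT X k -> 'I_n) K :
  (forall k, (k < K)%N -> mfib (idx k)) -> mfib (@idxsT n idx K).
Proof.
elim: K => [_|K IH h].
  have -> : @idxsT n idx 0 = fun _ => [tuple] by apply: funext => -[].
  exact: mfib_cst.
have -> : @idxsT n idx K.+1 = (fun v => (fun a (t : K.-tuple 'I_n) => [tuple of a :: t])
     ((idx K \o snd) v) ((@idxsT n idx K \o snd) v)) by [].
apply: (@mfib2 _ (smplT X K.+1) _ _ _ (idx K \o snd) (@idxsT n idx K \o snd)
  (fun a (t : K.-tuple 'I_n) => [tuple of a :: t])); apply: mfib_comp; try exact: measurable_snd.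
- exact: h.
- by apply: IH => k kK; apply: h; apply: ltnW.
Qed.

Lemma measurable_reads n (idx : forall k, smplT X k -> 'I_n) K :
  (forall k, (k < K)%N -> mfib (idx k)) -> measurable_fun setT (fun x => reads idx x K).
Proof.
elim: K => [_|K IH h] /=.
  exact: measurable_cst.
have mK : measurable_fun setT (fun x => reads idx x K).
  by apply: IH => k kK; apply: h; apply: ltnW.
apply: measurable_fun_pair => //.
apply: (@mfib_meas _ _ _ _ _ (fun x => idx K (reads idx x K)) (fun j x => obs x j)).
- exact: (mfib_comp mK (h K (ltnSn K))).
- move=> j; exact: measurable_obs.
Qed.

Lemma reads_split n N m (idx : forall k, smplT X k -> 'I_n) (idx0 : forall k, smplT X k -> 'I_N)
  (Phi : m.-tuple 'I_n -> m.-tuple 'I_N)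
  (hPhi : forall v : smplT X m, idxsT idx0 v = Phi (idxsT idx v))
  (F : smplT X m -> \bar R) (y : smplT X N) :
  F (reads idx0 y m) = \sum_(L : m.-tuple 'I_n)
     (if idxsT idx (selS (tnth (Phi L)) y) == L then F (selS (tnth (Phi L)) y) else 0).
Proof.
have key : forall L, idxsT idx (selS (tnth (Phi L)) y) = L ->
     selS (tnth (Phi L)) y = reads idx0 y m.
  move=> L hL; apply: consis_reads => i.
  by rewrite obs_selS hPhi hL.
set L0 := idxsT idx (reads idx0 y m).
have e0 : selS (tnth (Phi L0)) y = reads idx0 y m.
  apply: obs_ext => i; rewrite obs_selS reads_consis hPhi; by [].
rewrite (bigD1 L0) //= e0 eqxx big1 ?adde0 // => L nL.
case: eqP => // hL.
move: nL; rewrite -hL (key _ hL) eqxx; by [].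
Qed.

End Reads.


Section Sim.
Context {R : realType} {dX : measure_display} (X : measurableType dX).
Variable Q : probability X R.
Local Open Scope ereal_scope.
Variables (n m' : nat) (idx : forall k, smplT X k -> 'I_n).
Local Notation m := m'.+1.

Definition firstocc (L : seq 'I_n) (a : 'I_n) : 'I_m := inord (find (pred1 a) (rev L)).

Definition idx' k (w : smplT X k) : 'I_m := firstocc (idxsT idx w) (@idx k w).

Definition pat (L : m.-tuple 'I_n) : m.-tuple 'I_m := [tuple of map (firstocc L) L].

Lemma find_rev_cons (a0 a : 'I_n) (L0 : seq 'I_n) : a \in a0 :: L0 ->
  find (pred1 a) (rev (a0 :: L0)) = find (pred1 a) (rev L0).
Proof.
move=> aL; rewrite rev_cons -cats1 find_cat.
case: ifP => // hn.
have : a \notin L0 by rewrite -mem_rev -has_pred1 hn.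
move: aL; rewrite in_cons => /orP[/eqP ea|->] // _; subst a.
rewrite /= eqxx addn0.
apply/esym/eqP; rewrite eqn_leq find_size /= leqNgt -has_find hn; by [].
Qed.

Lemma idxs_pat k (v : smplT X k) :
  val (idxsT idx' v) = map (firstocc (idxsT idx v)) (idxsT idx v).
Proof.
elim: k v => [[]//|k IH] [b w] /=.
rewrite IH /idx' /=; congr cons.
- by rewrite /firstocc find_rev_cons // mem_head.
- apply/eq_in_map => a aL; rewrite /firstocc find_rev_cons //.
  by rewrite in_cons aL orbT.
Qed.

Lemma idxs_patT (v : smplT X m) : idxsT idx' v = pat (idxsT idx v).
Proof. by apply: val_inj; rewrite idxs_pat. Qed.

Lemma firstocc_inj (L : m.-tuple 'I_n) a b : a \in L -> b \in L ->
  firstocc L a = firstocc L b -> a = b.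
Proof.
move=> aL bL h.
have fa : (find (pred1 a) (rev L) < size (rev L))%N.
  by rewrite -has_find; apply/hasP; exists a; rewrite ?mem_rev ?inE //=.
rewrite size_rev size_tuple in fa.
have fb : (find (pred1 b) (rev L) < size (rev L))%N.
  by rewrite -has_find; apply/hasP; exists b; rewrite ?mem_rev ?inE //=.
rewrite size_rev size_tuple in fb.
have : find (pred1 a) (rev L) = find (pred1 b) (rev L).
  by move: (congr1 val h); rewrite /firstocc /= !inordK.
move=> e.
have ha : has (pred1 a) (rev L) by apply/hasP; exists a; rewrite ?mem_rev ?inE //=.
have hb : has (pred1 b) (rev L) by apply/hasP; exists b; rewrite ?mem_rev ?inE //=.
have := nth_find a ha; have := nth_find a hb; rewrite e /= => /eqP -> /eqP ->; by [].
Qed.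

Lemma factor (L : m.-tuple 'I_n) : exists r (dd : 'I_r -> 'I_n) (dd' : 'I_r -> 'I_m) (c : 'I_m -> 'I_r),
  [/\ injective dd, injective dd' & forall i, tnth L i = dd (c i) /\ tnth (pat L) i = dd' (c i)].
Proof.
set U := undup L.
have : forall i : 'I_m, exists j : 'I_(size U), tnth (in_tuple U) j = tnth L i.
  move=> i.
  have iU : tnth L i \in U by rewrite mem_undup mem_tnth.
  exists (Ordinal (n:=size U) (m:=index (tnth L i) U) (etrans (index_mem _ _) iU)).
  rewrite [LHS](tnth_nth (tnth L i)) /=; exact: nth_index.
case/fin_all_exists => c hc.
have injU : injective (tnth (in_tuple U)) by apply/tuple_uniqP; exact: undup_uniq.
exists (size U), (tnth (in_tuple U)), (fun j => firstocc L (tnth (in_tuple U) j)), c.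
split.
- exact: injU.
- move=> j1 j2 h; apply: injU.
  apply: (firstocc_inj _ _ h).
  + by rewrite -mem_undup mem_tnth.
  + by rewrite -mem_undup mem_tnth.
- move=> i; rewrite hc; split => //.
  by rewrite /pat tnth_map.
Qed.

Lemma selS_eq N r (f g : 'I_r -> 'I_N) (x : smplT X N) : f =1 g -> selS f x = selS g x.
Proof. by move=> fg; apply: obs_ext => i; rewrite !obs_selS fg. Qed.

Lemma sim_law (midx : forall k, (k < m)%N -> mfib (@idx k))
  (F : smplT X m -> \bar R) (mF : measurable_fun setT F) (F0 : forall v, 0 <= F v) :
  \int[iid Q n]_x F (reads idx x m) = \int[iid Q m]_y F (reads idx' y m).
Proof.
pose G L v := if idxsT idx v == L then F v else 0.
have mG : forall L, measurable_fun setT (G L).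
  move=> L.
  apply: (@mfib_meas _ _ _ _ _ (fun v => idxsT idx v == L) (fun b v => if b then F v else 0)).
  - apply: (@mfib2 _ _ _ _ _ (@idxsT _ _ _ idx m) (fun _ => tt) (fun t (_ : unit) => t == L)).
    + exact: mfib_idxs.
    + exact: mfib_cst.
  - by case => //; exact: measurable_cst.
have G0 : forall L v, 0 <= G L v by move=> L v; rewrite /G; case: ifP.
transitivity (\int[iid Q n]_x \sum_(L : m.-tuple 'I_n) G L (selS (tnth L) x)).
  apply: eq_integral => x _.
  exact: (@reads_split _ _ X n n m idx idx id (fun v => erefl) F x).
transitivity (\int[iid Q m]_y \sum_(L : m.-tuple 'I_n) G L (selS (tnth (pat L)) y)); last first.
  apply: eq_integral => y _; apply/esym.
  exact: (@reads_split _ _ X n m m idx idx' pat idxs_patT F y).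
rewrite ge0_integral_sum //; last first.
  by move=> L; apply: measurableT_comp (mG L) (measurable_selS _).
rewrite ge0_integral_sum //; last first.
  by move=> L; apply: measurableT_comp (mG L) (measurable_selS _).
apply: eq_bigr => L _.
have [r [dd [dd' [c [idd idd' hc]]]]] := factor L.
have mH : measurable_fun setT (fun z => G L (selS c z)).
  by apply: measurableT_comp (mG L) (measurable_selS _).
transitivity (\int[iid Q r]_z G L (selS c z)).
  rewrite -(sel_law Q (d:=dd) idd mH) //.
  apply: eq_integral => x _; rewrite -selS_comp; congr (G L _).
  by apply: selS_eq => i; case: (hc i).
rewrite -(sel_law Q (d:=dd') idd' mH) //.
apply: eq_integral => x _; rewrite -selS_comp; congr (G L _).
by apply: selS_eq => i; case: (hc i).
Qed.

End Sim.


Section Risk.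
Context {R : realType} {dX : measure_display} (X : measurableType dX).
Context {Theta : Type} (P : Theta -> probability X R).
Context {dY : measure_display} {Y : measurableType dY} (L : Y -> Theta -> \bar R).
Hypothesis L_ge0 : forall y theta, (0 <= L y theta)%E.
Hypothesis L_meas : forall theta, measurable_fun setT (fun y => L y theta).
Local Open Scope ereal_scope.

Lemma minimax_le_riskn n (g : smplT X n -> Y) : measurable_fun setT g ->
  minimax P L n <= riskn P L g.
Proof. by move=> mg; apply: ereal_inf_lbound; exists g. Qed.

Lemma riskn_eq n n' (f : smplT X n -> Y) (g : smplT X n' -> Y) :
  (forall theta, risk P L f theta = risk P L g theta) -> riskn P L f = riskn P L g.
Proof.
move=> h; rewrite /riskn; congr ereal_sup; apply/seteqP; split => _ [t _ <-]; exists t => //.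
Qed.

Lemma mfib_idx' n m' (idx : forall k, smplT X k -> 'I_n) k :
  (forall l, (l <= k)%N -> mfib (@idx l)) -> mfib (@idx' _ X n m' idx k).
Proof.
move=> h.
apply: (@mfib2 _ _ _ _ _ (@idxsT _ _ _ idx k) (@idx k) (fun t a => @firstocc n m' t a)).
- by apply: mfib_idxs => l lk; apply: h; apply: ltnW.
- exact: h.
Qed.

Lemma riskn_reading n m (f : smplT X n -> Y) :
  computed_reading m f -> minimax P L m <= riskn P L f.
Proof.
case=> idx [out [midx mout hf]].
case: m idx out midx mout hf => [|m'] idx out midx mout hf.
  have -> : riskn P L f = riskn P L (fun _ : smplT X 0 => out tt).
    apply: riskn_eq => t; rewrite /risk.
    under eq_integral do rewrite hf /=.
    by rewrite !int_cstP.
  apply: minimax_le_riskn; exact: measurable_cst.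
have midx' : forall k, (k < m'.+1)%N -> mfib (@idx k) by move=> k kl j; apply: midx.
have mg : measurable_fun setT (fun y : smplT X m'.+1 => out (reads (@idx' _ X n m' idx) y m'.+1)).
  apply: measurableT_comp; first exact: mout.
  apply: measurable_reads => k km; apply: mfib_idx' => l lk; apply: midx'.
  exact: leq_ltn_trans lk km.
have -> : riskn P L f = riskn P L (fun y : smplT X m'.+1 => out (reads (@idx' _ X n m' idx) y m'.+1)).
  apply: riskn_eq => t; rewrite /risk.
  under eq_integral do rewrite hf.
  apply: (sim_law (P t) midx' (F := fun v => L (out v) t)) => //.
  exact: measurableT_comp (L_meas t) mout.
exact: minimax_le_riskn.
Qed.

Lemma minimax_S k : minimax P L k.+1 <= minimax P L k.
Proof.
apply: le_ereal_inf_tmp => _ [g mg <-].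
have mg' : measurable_fun setT (fun x : smplT X k.+1 => g x.2).
  exact: measurableT_comp mg measurable_snd.
apply: le_trans (minimax_le_riskn mg') _.
rewrite (riskn_eq (g := g)) // => t; rewrite /risk.
rewrite (iidS (P t) (f := fun x : smplT X k.+1 => L (g x.2) t)) //.
  by rewrite /= int_cstP.
exact: measurableT_comp (L_meas t) mg'.
Qed.

Lemma minimax_mono k k' : (k <= k')%N -> minimax P L k' <= minimax P L k.
Proof.
move=> /subnK <-; elim: (k' - k)%N => [|j IH] //.
by rewrite addSn; apply: le_trans (minimax_S _) IH.
Qed.

End Risk.


Lemma esup_lt_ev (R : realType) (u : (\bar R)^nat) x :
  (limn_esup u < x)%E -> \forall n \near \oo, (u n < x)%E.
Proof.
rewrite /limn_esup /limf_esup => /ereal_inf_lt [_ [V hV <-]] hlt.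
apply: filterS hV => n Vn.
apply: le_lt_trans hlt; apply: ereal_sup_ubound; by exists n.
Qed.

Unset Implicit Arguments.
Theorem theorem4 (R : realType) (dX : measure_display) (X : measurableType dX)
  (Theta : Type) (P : Theta -> probability X R)
  (dY : measure_display) (Y : measurableType dY) (L : Y -> Theta -> \bar R)
  (L_ge0 : forall y theta, (0 <= L y theta)%E)
  (L_meas : forall theta, measurable_fun setT (fun y => L y theta))
  (R_fin : \forall n \near \oo,
      (0 < minimax P L n)%E /\ (minimax P L n < +oo)%E)
  (R_ratio : limn_esup (fun a : nat =>
      limn_esup (fun n : nat =>
        ((fine (minimax P L (a * n)%N) / fine (minimax P L n))%:E))) = 0%E)
  (phi : forall n : nat, smplT X n -> Y)
  (phi_meas : forall n, measurable_fun setT (phi n))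
  (phi_fast : exists b : nat -> nat,
      ((fun n => (b n)%:R / n%:R : R) @ \oo --> (0 : R)) /\
      \forall n \near \oo, exists m : nat, (m <= b n)%N /\ computed_reading m (phi n)) :
  (fun n : nat => (riskn P L (phi n) * ((fine (minimax P L n))^-1)%:E)%E)
    @ \oo --> +oo%E.
Proof.
case: phi_fast => b [hb hev].
set Rn := minimax P L.
apply/cvgeyPge => A.
set A' := Num.max A 1.
have A'1 : (1 <= A')%R by rewrite /A' le_max lexx orbT.
have A'0 : (0 < A')%R by apply: lt_le_trans A'1.
set eps := A'^-1.
have eps0 : (0 < eps)%R by rewrite invr_gt0.
have : \forall a \near \oo, (limn_esup (fun n : nat =>
        ((fine (Rn (a * n)%N) / fine (Rn n))%:E)) < eps%:E)%E.
  by apply: esup_lt_ev; rewrite R_ratio lte_fin.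
case=> Na _ hNa.
set a0 := Na.+1.
have a01 : (1 <= a0)%N by [].
have := esup_lt_ev (hNa a0 (leqnSn Na)).
case=> N1 _ hN1.
case: R_fin => N2 _ hN2.
case: hev => N3 _ hN3.
have : \forall n \near \oo, ((b n)%:R / n%:R < (a0%:R : R)^-1)%R.
  by apply: cvgr_lt hb _ _; rewrite invr_gt0 ltr0n.
case=> N4 _ hN4.
set N0 := maxn N1 N2.
exists (maxn (maxn (maxn N3 N4) (maxn N2 (a0 * N0))) 1) => // n /=.
rewrite !geq_max => /andP[/andP[/andP[nN3 nN4] /andP[nN2 naN0]] n1].
have [m [mb cr]] := hN3 n nN3.
set m2 := maxn m N0.
have h1 := riskn_reading P L_ge0 L_meas cr.
have h2 : (Rn m2 <= Rn m)%E by apply: (minimax_mono P L_ge0 L_meas) => //; rewrite leq_maxl.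
have bn : (a0 * b n < n)%N.
  have := hN4 n nN4.
  rewrite ltr_pdivrMr ?ltr0n //.
  by rewrite mulrC ltr_pdivlMr ?ltr0n // -natrM ltr_nat mulnC.
have am2 : (a0 * m2 <= n)%N.
  rewrite /m2 maxnMr geq_max naN0 andbT.
  by apply: leq_trans (ltnW bn); rewrite leq_mul2l mb orbT.
have h3 : (Rn n <= Rn (a0 * m2)%N)%E by apply: (minimax_mono P L_ge0 L_meas) => //.
have m2N1 : (N1 <= m2)%N by rewrite /m2 /N0 !leq_max leqnn !orbT.
have m2N2 : (N2 <= m2)%N by rewrite /m2 /N0 !leq_max leqnn !orbT.
have am2N2 : (N2 <= a0 * m2)%N.
  by apply: leq_trans m2N2 _; rewrite leq_pmull.
have h4 := hN1 m2 m2N1; rewrite /= lte_fin in h4.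
have [Rm0 Rmy] := hN2 m2 m2N2.
have [Ra0 Ray] := hN2 _ am2N2.
have [Rn0 Rny] := hN2 n nN2.
have fm : Rn m2 = (fine (Rn m2))%:E by rewrite fineK // ge0_fin_numE // ltW.
have fa : Rn (a0 * m2)%N = (fine (Rn (a0 * m2)%N))%:E by rewrite fineK // ge0_fin_numE // ltW.
have fn : Rn n = (fine (Rn n))%:E by rewrite fineK // ge0_fin_numE // ltW.
set rm := fine (Rn m2) in fm h4 *.
set ra := fine (Rn (a0 * m2)%N) in fa h4 *.
set rn := fine (Rn n) in fn *.
have rm0 : (0 < rm)%R by rewrite -lte_fin -fm.
have rn0 : (0 < rn)%R by rewrite -lte_fin -fn.
have rnra : (rn <= ra)%R by rewrite -lee_fin -fn -fa.
have rarm : (ra < eps * rm)%R by rewrite -ltr_pdivrMr // mulrC.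
have key : (A' < rm / rn)%R.
  rewrite ltr_pdivlMr //.
  apply: (@lt_le_trans _ _ (A' * (eps * rm))%R); last by rewrite mulrA divff ?gt_eqF // mul1r.
  rewrite ltr_pM2l //; exact: le_lt_trans rnra rarm.
apply: (@le_trans _ _ A'%:E); first by rewrite lee_fin le_max lexx.
apply: (@le_trans _ _ (rm%:E * (rn^-1)%:E)%E).
  by rewrite -EFinM lee_fin ltW.
apply: lee_wpmul2r; first by rewrite lee_fin invr_ge0 ltW.
rewrite -fm; apply: le_trans h1; exact: h2.
Qed.
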